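(* Let $z=(z^+,z^-)$ be a bi-sequence of $n$ nonnegative integers, and let $f_z(a)=\sum_i|z_i^+-a_i^+|+\sum_i|z_i^--a_i^-|$. Let $d\in B_n$ satisfy $f_z(d)=\min_{a\in B_n}f_z(a)$. (1) There exists $d_*\in B_n$ with $d_{*i}^+\le z_i^+$ for all $i$ and $f_z(d_* )=f_z(d)$. (2) There exists $d_*\in B_n$ with $d_{*i}^-\le z_i^-$ for all $i$ and $f_z(d_* )=f_z(d)$.
   Context: $B_n$ is the set of all bi-degree sequences $a=(a^+,a^-)$ (out-degrees $a_i^+$, in-degrees $a_i^-$) of simple directed graphs (no loops, no multiple edges) on nodes $\{1,\dots,n\}$. *)

(* Defs.v *)
From mathcomp Require Import all_boot.
Set Implicit Arguments. Unset Strict Implicit. Unset Printing Implicit Defensive.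

(* A bi-sequence on n nodes: (out-sequence a^+, in-sequence a^-). *)
Definition biseq (n : nat) : Type := (('I_n -> nat) * ('I_n -> nat))%type.

(* Simple directed graph on 'I_n: a relation without loops (a relation
   automatically has no multiple edges; opposite arcs are allowed). *)
Definition is_digraph (n : nat) (g : rel 'I_n) : Prop := forall i, ~~ g i i.

Definition outdeg n (g : rel 'I_n) (i : 'I_n) : nat := #|[set j | g i j]|.
Definition indeg n (g : rel 'I_n) (i : 'I_n) : nat := #|[set j | g j i]|.

Definition in_Bn (n : nat) (a : biseq n) : Prop :=
  exists g : rel 'I_n, is_digraph g /\
    (forall i, a.1 i = outdeg g i) /\ (forall i, a.2 i = indeg g i).

Definition natdist (m k : nat) : nat := (m - k) + (k - m).

Definition fz (n : nat) (z a : biseq n) : nat :=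
  \sum_(i < n) natdist (z.1 i) (a.1 i) + \sum_(i < n) natdist (z.2 i) (a.2 i).

(* Main.v *)
Require Import Defs.
From mathcomp Require Import all_boot.
From mathcomp Require Import zify.
Set Implicit Arguments. Unset Strict Implicit. Unset Printing Implicit Defensive.

Definition degs n (g : rel 'I_n) : biseq n := (fun i => outdeg g i, fun i => indeg g i).

Definition rmarc n (g : rel 'I_n) (i j : 'I_n) : rel 'I_n :=
  fun x y => g x y && ((x, y) != (i, j)).

Lemma sum_ind n (i : 'I_n) : \sum_(x < n) (x == i) = 1.
Proof. by rewrite (bigD1 i) //= eqxx big1 // => x /negbTE ->. Qed.

Lemma outdeg_rm n (g : rel 'I_n) (i j : 'I_n) : g i j ->
  forall x : 'I_n, outdeg (rmarc g i j) x + (x == i) = outdeg g x.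
Proof.
move=> gij x; rewrite /outdeg /rmarc.
case: eqP => [->|/eqP ne].
  have -> : [set y | g i y && ((i, y) != (i, j))] = [set y | g i y] :\ j.
    by apply/setP => y; rewrite !inE xpair_eqE eqxx /= andbC.
  by rewrite [in RHS](cardsD1 j [set y | g i y]) inE gij addnC.
have -> // : [set y | g x y && ((x, y) != (i, j))] = [set y | g x y].
  by apply/setP => y; rewrite !inE xpair_eqE (negbTE ne) /= andbT.
by rewrite addn0.
Qed.

Lemma indeg_rm n (g : rel 'I_n) (i j : 'I_n) : g i j ->
  forall y : 'I_n, indeg (rmarc g i j) y + (y == j) = indeg g y.
Proof.
move=> gij y; rewrite /indeg /rmarc.
case: eqP => [->|/eqP ne].
  have -> : [set x | g x j && ((x, j) != (i, j))] = [set x | g x j] :\ i.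
    by apply/setP => x; rewrite !inE xpair_eqE eqxx /= andbT andbC.
  by rewrite [in RHS](cardsD1 i [set x | g x j]) inE gij addnC.
have -> // : [set x | g x y && ((x, y) != (i, j))] = [set x | g x y].
  by apply/setP => x; rewrite !inE xpair_eqE (negbTE ne) /= andbF andbT.
by rewrite addn0.
Qed.

Lemma main n (z : biseq n) (m : nat) :
  (forall a : biseq n, in_Bn a -> m <= fz z a) ->
  forall k (g : rel 'I_n), is_digraph g ->
  \sum_(x < n) (outdeg g x - z.1 x) = k -> fz z (degs g) = m ->
  exists ds : biseq n, in_Bn ds /\ (forall i, ds.1 i <= z.1 i) /\ fz z ds = m.
Proof.
move=> hmin k; elim: k => [|k IH] g dg hk hf.
  exists (degs g); split; first by exists g.
  split => // i /=.
  move: hk; rewrite (bigD1 i) //=; lia.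
case: (pickP (fun i => z.1 i < outdeg g i)) => [i /= hi|hno]; last first.
  move: hk; rewrite big1 // => x _; apply/eqP; rewrite subn_eq0 leqNgt.
  by rewrite hno.
case: (pickP (fun j => g i j)) => [j /= gij|hnoj]; last first.
  move: hi; rewrite /outdeg.
  have -> : [set j | g i j] = set0 by apply/setP => j; rewrite !inE hnoj.
  by rewrite cards0.
have dg' : is_digraph (rmarc g i j).
  by move=> x; rewrite /rmarc negb_and dg.
have ho := outdeg_rm gij; have hi' := indeg_rm gij.
apply: (IH (rmarc g i j)) => //.
  apply/eqP; rewrite -eqSS; apply/eqP; rewrite -hk -addn1 -(sum_ind i) -big_split /=.
  apply: eq_bigr => x _; have := ho x; case: (x =P i) => [->|_] /=; lia.
apply/eqP; rewrite eqn_leq hmin; last by exists (rmarc g i j).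
rewrite -hf /fz /=.
have h1 : \sum_(x < n) natdist (z.1 x) (outdeg (rmarc g i j) x) + 1 =
          \sum_(x < n) natdist (z.1 x) (outdeg g x).
  rewrite -(sum_ind i) -big_split /=; apply: eq_bigr => x _.
  have := ho x; rewrite /natdist; case: (x =P i) => [->|_] /=; lia.
have h2 : \sum_(x < n) natdist (z.2 x) (indeg (rmarc g i j) x) <=
          \sum_(x < n) natdist (z.2 x) (indeg g x) + 1.
  rewrite -(sum_ind j) -big_split /=; apply: leq_sum => x _.
  have := hi' x; rewrite /natdist; case: (x =P j) => [->|_] /=; lia.
by rewrite andbT -h1 -addnA leq_add2l addnC.
Qed.

Lemma part1 n (z d : biseq n) :
  in_Bn d ->
  (forall a : biseq n, in_Bn a -> fz z d <= fz z a) ->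
  (exists ds : biseq n, in_Bn ds /\ (forall i, ds.1 i <= z.1 i) /\ fz z ds = fz z d).
Proof.
move=> [g [dg [h1 h2]]] hmin.
have hf : fz z (degs g) = fz z d.
  by rewrite /fz /=; congr (_ + _); apply: eq_bigr => x _; rewrite ?h1 ?h2.
exact: (main hmin dg erefl hf).
Qed.

Definition swapb n (a : biseq n) : biseq n := (a.2, a.1).

Lemma in_Bn_swap n (a : biseq n) : in_Bn a -> in_Bn (swapb a).
Proof.
move=> [g [dg [h1 h2]]]; exists (fun x y => g y x); split => //.
Qed.

Lemma fz_swap n (z a : biseq n) : fz (swapb z) (swapb a) = fz z a.
Proof. by rewrite /fz addnC. Qed.

Theorem proposition4 (n : nat) (z d : biseq n) :
  in_Bn d ->
  (forall a : biseq n, in_Bn a -> fz z d <= fz z a) ->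
  (exists ds : biseq n, in_Bn ds /\ (forall i, ds.1 i <= z.1 i) /\ fz z ds = fz z d) /\
  (exists ds : biseq n, in_Bn ds /\ (forall i, ds.2 i <= z.2 i) /\ fz z ds = fz z d).
Proof.
move=> hd hmin; split; first exact: part1.
have hmin' : forall a : biseq n, in_Bn a -> fz (swapb z) (swapb d) <= fz (swapb z) a.
  move=> a ha; rewrite fz_swap.
  have := hmin (swapb a) (in_Bn_swap ha).
  by rewrite -(fz_swap z (swapb a)).
have [ds [hb [hle hf]]] := part1 (in_Bn_swap hd) hmin'.
exists (swapb ds); split; first exact: in_Bn_swap.
split; first exact: hle.
by rewrite -(fz_swap z d) -hf; case: ds {hb hle hf} => a b; rewrite /fz addnC.
Qed.
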